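(* Let $m\ge 1$, let ${\bf h}\in\mathbb{F}_q^m$ be a nonzero column vector, and let $C$ be the linear $[m+1,m,d]_q$ code with generator matrix $G=[I\,|\,{\bf h}]$, where $I$ is the $m\times m$ identity matrix. If $\mathrm{wt}({\bf h})<m$, then $C$ is a completely regular code with $d=\rho=1$. If $\mathrm{wt}({\bf h})=m$, then $C$ is a completely regular code with $d=2$ and $\rho=1$.
   Context: $\mathbb{F}_q$ is the finite field with $q$ elements; $\mathrm{wt}$ is Hamming weight, $d$ the minimum Hamming distance of the code, and $\rho=\max_{{\bf v}\in\mathbb{F}_q^{m+1}}\min_{{\bf x}\in C}d({\bf v},{\bf x})$ its covering radius. A code $C$ is completely regular if for every vector ${\bf x}$, with $t=d({\bf x},C)$, the number of codewords at distance $i$ from ${\bf x}$ depends only on $t$ and $i$. *)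

(* Defs.v *)
From mathcomp Require Import all_boot all_order all_algebra all_field.
Set Implicit Arguments. Unset Strict Implicit. Unset Printing Implicit Defensive.
Import GRing.Theory.
Local Open Scope ring_scope.

Section Codes.
Variables (F : finFieldType) (n : nat).

Definition wt (v : 'rV[F]_n) : nat := #|[set i : 'I_n | v 0 i != 0]|.

Definition hdist (x y : 'rV[F]_n) : nat := wt (x - y).

(* minimum distance of a code (meaningful when C has >= 2 codewords;
   default value n is >= every distance) *)
Definition min_dist (C : {set 'rV[F]_n}) : nat :=
  \big[minn/n]_(xy in [set xy : 'rV[F]_n * 'rV[F]_n |
                        (xy.1 \in C) && (xy.2 \in C) && (xy.1 != xy.2)])
     hdist xy.1 xy.2.

Definition dist_code (v : 'rV[F]_n) (C : {set 'rV[F]_n}) : nat :=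
  \big[minn/n]_(c in C) hdist v c.

Definition covering_radius (C : {set 'rV[F]_n}) : nat :=
  \max_(v : 'rV[F]_n) dist_code v C.

Definition completely_regular (C : {set 'rV[F]_n}) : Prop :=
  forall x y : 'rV[F]_n, dist_code x C = dist_code y C ->
    forall i : nat,
      #|[set c in C | hdist x c == i]| = #|[set c in C | hdist y c == i]|.

End Codes.

Definition code_of_gen (F : finFieldType) (k n : nat) (G : 'M[F]_(k, n))
  : {set 'rV[F]_n} := [set u *m G | u : 'rV[F]_k].

Definition gen_Ih (F : finFieldType) (m : nat) (h : 'cV[F]_m) : 'M[F]_(m, m + 1) :=
  row_mx 1%:M h.

(* Main.v *)
Require Import Defs.
From mathcomp Require Import all_boot all_order all_algebra all_field.
From mathcomp Require Import ring.
Local Open Scope ring_scope.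
Set Implicit Arguments. Unset Strict Implicit.
Import GRing.Theory.

Section Aux.
Variable F : finFieldType.

Lemma wtE n (v : 'rV[F]_n) : wt v = \sum_(i | v 0 i != 0) 1%N.
Proof. by rewrite /wt sum1dep_card. Qed.

Lemma wt_row_mx a b (u : 'rV[F]_a) (w : 'rV[F]_b) :
  wt (row_mx u w) = (wt u + wt w)%N.
Proof.
rewrite !wtE big_split_ord /=.
by congr (_ + _)%N; apply: eq_bigl => i; rewrite ?row_mxEl ?row_mxEr.
Qed.

Lemma wt_gt0 n (v : 'rV[F]_n) : (0 < wt v)%N = (v != 0).
Proof.
rewrite /wt card_gt0; apply/set0Pn/idP => [[i]|].
  rewrite inE => Hi; apply/eqP => v0; by move: Hi; rewrite v0 mxE eqxx.
move=> Hv; apply/existsP; apply: contraNT Hv; rewrite negb_exists => /forallP H.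
apply/eqP/matrixP => i j; rewrite !ord1 mxE; move: (H j); rewrite inE.
by move/negbNE/eqP.
Qed.

Lemma wt0 n : wt (0 : 'rV[F]_n) = 0%N.
Proof. by apply/eqP; rewrite -leqn0 leqNgt wt_gt0 eqxx. Qed.

Lemma wt_le n (v : 'rV[F]_n) : (wt v <= n)%N.
Proof. by rewrite /wt (leq_trans (max_card _)) // card_ord. Qed.

Lemma wt_scale n (k : F) (v : 'rV[F]_n) : k != 0 -> wt (k *: v) = wt v.
Proof.
move=> k0; rewrite /wt; apply: eq_card => i; rewrite !inE mxE.
by rewrite mulf_eq0 (negbTE k0).
Qed.

Lemma wt_opp n (v : 'rV[F]_n) : wt (- v) = wt v.
Proof. by rewrite /wt; apply: eq_card => i; rewrite !inE mxE oppr_eq0. Qed.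

Lemma bigmin_le (T : finType) (A : {set T}) (f : T -> nat) d c :
  c \in A -> (\big[minn/d]_(x in A) f x <= f c)%N.
Proof.
move=> cA; have : c \in index_enum T by rewrite mem_index_enum.
elim: (index_enum _) => //= a s IH; rewrite inE big_cons => /orP[/eqP<-|cs].
  by rewrite cA geq_minl.
case: ifP => _ //; last exact: IH.
exact: leq_trans (geq_minr _ _) (IH cs).
Qed.

Lemma bigmin_ge T (P : pred T) (f : T -> nat) d r (s : seq T) :
  (r <= d)%N -> (forall x, P x -> r <= f x)%N ->
  (r <= \big[minn/d]_(x <- s | P x) f x)%N.
Proof.
move=> rd H; elim/big_ind: _ => //.
by move=> x y Hx Hy; rewrite leq_min Hx Hy.
Qed.

Variable m : nat.
Variable h : 'cV[F]_m.

Definition phi (v : 'rV[F]_(m + 1)) : F := (rsubmx v - lsubmx v *m h) 0 0.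

Lemma phiB u v : phi (u - v) = phi u - phi v.
Proof.
rewrite /phi linearB /= linearB /= mulmxBl !mxE.
by ring.
Qed.

Lemma phiZ k v : phi (k *: v) = k * phi v.
Proof. by rewrite /phi linearZ /= linearZ /= -scalemxAl -scalerBr mxE. Qed.

Lemma phiD u v : phi (u + v) = phi u + phi v.
Proof.
have HN : phi (- v) = - phi v by rewrite -scaleN1r phiZ mulN1r.
by rewrite -[v]opprK phiB HN !opprK.
Qed.

Definition elast : 'rV[F]_(m + 1) := row_mx 0 1.

Lemma phi_elast : phi elast = 1.
Proof. by rewrite /phi row_mxKl row_mxKr mul0mx subr0 mxE. Qed.

Lemma wt_elast k : (wt (k *: elast) <= 1)%N.
Proof. by rewrite /elast scale_row_mx wt_row_mx scaler0 wt0 add0n wt_le. Qed.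

Lemma memC v : (v \in code_of_gen (gen_Ih h)) = (phi v == 0).
Proof.
apply/imsetP/idP => [[u _ ->]|].
  by rewrite /gen_Ih mul_mx_row mulmx1 /phi row_mxKl row_mxKr subrr mxE.
move=> /eqP H; exists (lsubmx v) => //.
rewrite /gen_Ih mul_mx_row mulmx1 -[LHS]hsubmxK; congr row_mx.
apply/eqP; rewrite -subr_eq0; apply/eqP/matrixP => i j; rewrite !ord1 [RHS]mxE.
exact: H.
Qed.

Definition C := code_of_gen (gen_Ih h).

Lemma C0 : (0 : 'rV[F]_(m+1)) \in C.
Proof. by rewrite memC /phi linear0 /= linear0 mul0mx subr0 mxE. Qed.

Lemma dist0 v : v \in C -> dist_code v C = 0%N.
Proof.
move=> vC; apply/eqP; rewrite -leqn0 (leq_trans (bigmin_le _ _ vC)) //.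
by rewrite /hdist subrr wt0.
Qed.

Lemma dist1 v : v \notin C -> (1 <= dist_code v C)%N.
Proof.
move=> vC; apply: bigmin_ge => [|c cC]; first by rewrite addn1.
rewrite /hdist wt_gt0 subr_eq0; by apply: contraNneq vC => ->.
Qed.

Lemma dist_le1 v : (dist_code v C <= 1)%N.
Proof.
have Hc : v - phi v *: elast \in C by rewrite memC phiB phiZ phi_elast mulr1 subrr.
apply: leq_trans (bigmin_le _ _ Hc) _.
by rewrite /hdist opprB addrC subrK wt_elast.
Qed.

Lemma dist_eq0 v : (dist_code v C == 0%N) = (v \in C).
Proof.
case: (boolP (v \in C)) => H; first by rewrite dist0.
by apply/negbTE; rewrite -lt0n dist1.
Qed.

Lemma cr : covering_radius C = 1%N.
Proof.
apply/eqP; rewrite eqn_leq; apply/andP; split.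
  by apply/bigmax_leqP => v _; apply: dist_le1.
apply: leq_trans (leq_bigmax elast); apply: dist1.
by rewrite memC phi_elast oner_eq0.
Qed.

Lemma cr_le x y : phi x == 0 = (phi y == 0) -> forall i,
  (#|[set c in C | hdist x c == i]| <= #|[set c in C | hdist y c == i]|)%N.
Proof.
move=> Hxy i.
pose k := if phi x == 0 then 1 else phi y / phi x.
have k0 : k != 0.
  rewrite /k; case: ifP => Hx; first exact: oner_neq0.
  by rewrite mulf_neq0 ?invr_eq0 -?Hxy ?Hx.
have kx : phi y - k * phi x = 0.
  rewrite /k; case: ifP => Hx; first by move: Hxy; rewrite Hx => /esym/eqP->; rewrite (eqP Hx) mulr0 subr0.
  by rewrite mulfVK ?Hx // subrr.
pose f c := y + k *: (c - x).
have finj : injective f.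
  move=> a b /addrI /(congr1 ( *:%R k^-1)); rewrite !scalerA mulVf // !scale1r.
  by move/addIr.
rewrite -(card_imset _ finj); apply: subset_leq_card; apply/subsetP => z.
case/imsetP => c; rewrite !inE => /andP[cC /eqP hc] ->; apply/andP; split.
  rewrite memC /f phiD phiZ phiB mulrBr.
  by move: cC; rewrite memC => /eqP ->; rewrite mulr0 sub0r kx.
apply/eqP; rewrite /hdist /f opprD addrA subrr add0r -scalerN opprB wt_scale //.
Qed.

Lemma creg : completely_regular C.
Proof.
move=> x y Hd i.
have Hxy : phi x == 0 = (phi y == 0) by rewrite -!memC -!dist_eq0 Hd.
by apply/eqP; rewrite eqn_leq !cr_le.
Qed.

Lemma wt_delta n (i : 'I_n) : wt (delta_mx 0 i : 'rV[F]_n) = 1%N.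
Proof.
rewrite /wt; transitivity #|[set i]|; last exact: cards1.
apply: eq_card => j; rewrite !inE mxE /=.
by case: (j == i); rewrite ?oner_eq0 ?eqxx.
Qed.

Lemma wt_full n (v : 'rV[F]_n) : (forall i, v 0 i != 0) -> wt v = n.
Proof.
move=> H; rewrite /wt -[RHS]card_ord -cardsT; apply: eq_card => i.
by rewrite !inE H.
Qed.

Lemma wt_full_inv n (v : 'rV[F]_n) : wt v = n -> forall i, v 0 i != 0.
Proof.
move=> H i; have : [set j | v 0 j != 0] == [set: 'I_n].
  rewrite eqEcard subsetT cardsT card_ord.
  by rewrite /=; move: H; rewrite /wt => ->.
by move/eqP/setP/(_ i); rewrite !inE.
Qed.

Lemma memC_row c : c \in C -> c = row_mx (lsubmx c) (lsubmx c *m h).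
Proof.
rewrite memC => /eqP H; rewrite -[LHS]hsubmxK; congr row_mx.
apply/eqP; rewrite -subr_eq0; apply/eqP/matrixP => i j; rewrite !ord1 [RHS]mxE.
exact: H.
Qed.

Lemma min_dist_ge r : (r <= m + 1)%N ->
  (forall c, c \in C -> c != 0 -> (r <= wt c)%N) -> (r <= min_dist C)%N.
Proof.
move=> rm H; apply: bigmin_ge => // [[a b]]; rewrite inE /= => /andP[/andP[aC bC] ab].
apply: H; first by move: aC bC; rewrite !memC phiB => /eqP-> /eqP->; rewrite subrr.
by rewrite subr_eq0.
Qed.

Lemma min_dist_le c : c \in C -> c != 0 -> (min_dist C <= wt c)%N.
Proof.
move=> cC c0; have P : (c, 0) \in [set xy : 'rV[F]_(m+1) * 'rV[F]_(m+1) |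
                        (xy.1 \in C) && (xy.2 \in C) && (xy.1 != xy.2)].
  by rewrite inE /= cC C0.
by apply: leq_trans (bigmin_le _ _ P) _; rewrite /hdist subr0.
Qed.

End Aux.

Theorem theorem3p1 (F : finFieldType) (m : nat) (h : 'cV[F]_m) :
  (1 <= m)%N -> h != 0 ->
  let C := code_of_gen (gen_Ih h) in
  ((wt h^T < m)%N ->
     completely_regular C /\ min_dist C = 1%N /\ covering_radius C = 1%N) /\
  (wt h^T = m ->
     completely_regular C /\ min_dist C = 2%N /\ covering_radius C = 1%N).
Proof.
move=> m1 h0 C; have Hcr : completely_regular C := creg (h:=h).
have Hcov : covering_radius C = 1%N := cr h.
have mdge := @min_dist_ge F m h; have mdle := @min_dist_le F m h.
split => Hw; split => //; split => //.
- have [i hi] : exists i, h i 0 = 0.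
    case: (pickP (fun i => h i 0 == 0)) => [i /eqP hi|H]; first by exists i.
    have : wt h^T = m by apply: wt_full => j; rewrite mxE H.
    by move=> E; move: Hw; rewrite E ltnn.
  have cC : row_mx (delta_mx 0 i) (0 : 'rV[F]_1) \in C.
    have -> : row_mx (delta_mx 0 i) (0 : 'rV[F]_1) = delta_mx 0 i *m gen_Ih h.
      rewrite /gen_Ih mul_mx_row mulmx1 -rowE; congr row_mx.
      by apply/matrixP => a b; rewrite !ord1 !mxE hi.
    exact: imset_f.
  have wc : wt (row_mx (delta_mx 0 i) (0 : 'rV[F]_1)) = 1%N by rewrite wt_row_mx wt0 wt_delta.
  apply/eqP; rewrite eqn_leq; apply/andP; split.
    by rewrite (leq_trans (mdle _ cC _)) ?wc // -wt_gt0 wc.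
  apply: mdge; first by rewrite addn1.
  by move=> c _ c0; rewrite wt_gt0.
- have hi : forall i, h i 0 != 0.
    by move=> i; have := wt_full_inv Hw i; rewrite mxE.
  pose i0 : 'I_m := Ordinal m1.
  have cC : row_mx (delta_mx 0 i0) (row i0 h) \in C.
    have -> : row_mx (delta_mx 0 i0) (row i0 h) = delta_mx 0 i0 *m gen_Ih h.
      by rewrite /gen_Ih mul_mx_row mulmx1 -rowE.
    exact: imset_f.
  have w1 : wt (row i0 h) = 1%N.
    apply/eqP; rewrite eqn_leq wt_le wt_gt0; apply/eqP => /matrixP /(_ 0 0).
    by rewrite !mxE; apply/eqP.
  have wc : wt (row_mx (delta_mx 0 i0) (row i0 h)) = 2%N by rewrite wt_row_mx w1 wt_delta.
  apply/eqP; rewrite eqn_leq; apply/andP; split.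
    by rewrite (leq_trans (mdle _ cC _)) ?wc // -wt_gt0 wc.
  apply: mdge; first by rewrite addn1 ltnS.
  move=> c cC0 c0; rewrite (memC_row cC0) wt_row_mx.
  set u := lsubmx c.
  have u0 : u != 0.
    apply: contraNneq c0 => u0; rewrite (memC_row cC0) -/u u0 mul0mx.
    by apply/eqP/matrixP => a b; rewrite !mxE; case: splitP => *; rewrite mxE.
  have : (0 < wt u)%N by rewrite wt_gt0.
  rewrite leq_eqVlt => /orP[/eqP wu1|]; last by move=> H; apply: leq_trans H (leq_addr _ _).
  rewrite -wu1 addnC addn1 ltnS wt_gt0.
  move: wu1; rewrite /wt => /esym/eqP/cards1P[j Hj].
  apply/eqP => /matrixP /(_ 0 0); rewrite !mxE (bigD1 j) //= big1 ?addr0.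
    apply/eqP; rewrite mulf_neq0 ?hi //.
    have : j \in [set j | u 0 j != 0] by rewrite Hj set11.
    by rewrite inE.
  move=> a aj; have : a \notin [set j | u 0 j != 0] by rewrite Hj in_set1.
  by rewrite inE negbK => /eqP ->; rewrite mul0r.
Qed.
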